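(* Let $\mathcal{B}\models Th(\mathbb{N})$ be nonstandard, $\Delta\in B$ nonstandard, and $P$ the $2^\Delta$-th prime of $\mathcal{B}$. Let $S\subseteq B^3$ be a set definable in $\mathcal{B}$ consisting of pairwise disjoint triples $(p,q,r)$ of primes of $\mathcal{B}$ with $3p+5q=2r$ and $p,q,r>P$. Let $O=\{Q\in B: n\mid Q \text{ and } 2^{n\Delta}\mid Q \text{ for all standard } 0<n\in\mathbb{N}\}$. For $Q\in O$ define the $\mathbb{P}\times\mathbb{P}$-matrix $\varepsilon(Q)$ by: $\varepsilon(Q)_{pq}=Q/2^\Delta$ if $p,q\le P$; $\varepsilon(Q)_{pq}=Q/3$ if $p,q$ are members of the same triple of $S$ (including $p=q$ lying in some triple); $\varepsilon(Q)_{pq}=Q$ if $p=q>P$ and $p$ lies in no triple of $S$; and $\varepsilon(Q)_{pq}=0$ otherwise. Then $Q\mapsto\varepsilon(Q)$ is a $\langle 0,+,\dot{-},\cdot\rangle$-homomorphism, even an embedding, from $O$ (a $\langle 0,+,\dot{-},\cdot\rangle$-substructure of $\mathcal{B}$) into $M^{good}_{\mathbb{P}}(\mathcal{B})$.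
   Context: $\mathbb{P}$ denotes the set of primes of $\mathcal{B}$. $a\dot{-}b=a-b$ if $a\ge b$, else $0$. A $\mathbb{P}\times\mathbb{P}$-matrix $M$ over $B$ is good in $\mathcal{B}$ if for every $J\in B$ the set $\{(p,q,M_{pq}):q<J, M_{pq}\ne0\}$ is coded in $\mathcal{B}$ (Gödel coding of finite sets); $M^{good}_{\mathbb{P}}(\mathcal{B})$ is the set of such matrices with matrix addition and multiplication computed in $\mathcal{B}$. *)

(* Defs.v *)
From mathcomp Require Import all_boot.
Set Implicit Arguments. Unset Strict Implicit. Unset Printing Implicit Defensive.

Inductive term : Type :=
| TVar of nat | TZero | TOne | TPlus of term & term | TTimes of term & term.

Inductive form : Type :=
| FEq of term & term | FLt of term & term | FBot
| FImp of form & form | FAnd of form & form | FOr of form & form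
| FAll of nat & form | FEx of nat & form.   (* FAll i f binds variable i *)

Record arith_struct := ArithStruct {
  carrier :> Type;
  zeroS : carrier; oneS : carrier;
  addS : carrier -> carrier -> carrier;
  mulS : carrier -> carrier -> carrier;
  ltS : carrier -> carrier -> Prop }.

Definition natS : arith_struct :=
  @ArithStruct nat 0 1 addn muln (fun m n => is_true (m < n)).

Definition upd (B : Type) (e : nat -> B) (i : nat) (v : B) : nat -> B :=
  fun j => if Nat.eqb j i then v else e j.

Fixpoint evalT (B : arith_struct) (e : nat -> B) (t : term) : B :=
  match t with
  | TVar i => e i
  | TZero => zeroS B
  | TOne => oneS B
  | TPlus t u => addS (evalT e t) (evalT e u)
  | TTimes t u => mulS (evalT e t) (evalT e u)
  end.

Fixpoint sat (B : arith_struct) (f : form) (e : nat -> B) : Prop :=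
  match f with
  | FEq t u => evalT e t = evalT e u
  | FLt t u => ltS (evalT e t) (evalT e u)
  | FBot => False
  | FImp f g => sat f e -> sat g e
  | FAnd f g => sat f e /\ sat g e
  | FOr f g => sat f e \/ sat g e
  | FAll i f => forall v : B, sat f (upd e i v)
  | FEx i f => exists v : B, sat f (upd e i v)
  end.

(* B |= Th(N): every sentence (= universal closure of a formula) true in N
   is true in B. *)
Definition models_ThN (B : arith_struct) : Prop :=
  forall f : form, (forall e : nat -> nat, sat (B := natS) f e) ->
                   (forall e : nat -> B, sat f e).

Fixpoint numB (B : arith_struct) (n : nat) : B :=
  match n with 0 => zeroS B | k.+1 => addS (numB B k) (oneS B) end.

Definition nonstandard_elt (B : arith_struct) (x : B) : Prop :=
  forall n : nat, x <> numB B n.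

Definition nonstandard (B : arith_struct) : Prop := exists x : B, nonstandard_elt x.

Definition interprets (B : arith_struct) (RN : (nat -> nat) -> Prop)
    (RB : (nat -> B) -> Prop) : Prop :=
  exists f : form, (forall e, sat (B := natS) f e <-> RN e) /\
                   (forall e, sat f e <-> RB e).

Definition env3 (B : Type) (p q r : B) (e0 : nat -> B) : nat -> B :=
  fun i => match i with 0 => p | 1 => q | 2 => r | k.+3 => e0 k end.

Definition definable3 (B : arith_struct) (S : B -> B -> B -> Prop) : Prop :=
  exists (f : form) (e0 : nat -> B), forall p q r, S p q r <-> sat f (env3 p q r e0).

Section InB.
Variable B : arith_struct.
Definition leB (x y : B) : Prop := ltS x y \/ x = y.
Definition primeB (p : B) : Prop :=
  ltS (oneS B) p /\ forall a b : B, p = mulS a b -> a = oneS B \/ b = oneS B.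
Definition dvdB (a b : B) : Prop := exists k : B, b = mulS a k.
End InB.

(* 1-indexed: the k-th prime (the 1st prime is 2). *)
Definition nthPrimeN (k p : nat) : bool := prime p && (count prime (iota 0 p.+1) == k).
(* Goedel (Ackermann) coding of finite sets: x is in the set coded by c
   iff bit x of c is 1. *)
Definition memN (x c : nat) : bool := odd (c %/ 2 ^ x).
Definition pairN (x y : nat) : nat := ((x + y) * (x + y).+1)./2 + y.
Definition tripN (a b d : nat) : nat := pairN a (pairN b d).
(* For codes c1 (of a set of triples (p,q,m)) and c2 (of triples (q,r,n)):
   sum over q of m*n with (p,q,m) in c1 and (q,r,n) in c2.  (bounds are
   harmless: x in code c implies x < c, and a triple code dominates
   its components) *)
Definition sumN (c1 c2 p r : nat) : nat :=
  \sum_(q < c2.+1) \sum_(m < c1.+1) \sum_(n < c2.+1)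
     (memN (tripN p q m) c1 && memN (tripN q r n) c2) * (m * n).

Section Matrices.
Variable B : arith_struct.
Variable memB : B -> B -> B -> B -> Prop.   (* memB a b d c : (a,b,d) in code c *)
Variable sumB : B -> B -> B -> B -> B.

Definition codesB (M : B -> B -> B) (J c : B) : Prop :=
  forall a b d : B, memB a b d c <->
    (primeB a /\ primeB b /\ ltS b J /\ M a b <> zeroS B /\ d = M a b).

Definition goodB (M : B -> B -> B) : Prop := forall J : B, exists c : B, codesB M J c.

(* R is the product M N computed in B: (MN)_pr = sum_q M_pq N_qr, computed
   as the B-internal sum over codes of the (B-finitely many) relevant entries *)
Definition matmulB (M N R : B -> B -> B) : Prop :=
  forall p r : B, primeB p -> primeB r ->
  forall J c1 c2 : B, codesB M J c1 -> codesB N (addS r (oneS B)) c2 ->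
    (forall q, primeB q -> N q r <> zeroS B -> ltS q J) ->
    R p r = sumB c1 c2 p r.
End Matrices.

(* Main.v *)
From Stdlib Require Import Setoid Classical PeanoNat.
Require Import Defs.
From mathcomp Require Import all_boot zify.
Set Implicit Arguments. Unset Strict Implicit. Unset Printing Implicit Defensive.

Section Syn.
Variable B : arith_struct.

Lemma evalT_ext (e e' : nat -> B) t : (forall i, e i = e' i) -> evalT e t = evalT e' t.
Proof. move=> H; elim: t => //= [t1 -> t2 ->|t1 -> t2 ->] //. Qed.

Lemma sat_ext f : forall (e e' : nat -> B), (forall i, e i = e' i) -> (sat f e <-> sat f e').
Proof.
elim: f => /=.
- by move=> t u e e' H; rewrite !(evalT_ext t H) !(evalT_ext u H).
- by move=> t u e e' H; rewrite !(evalT_ext t H) !(evalT_ext u H).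
- by [].
- move=> f IHf g IHg e e' H; rewrite (IHf _ _ H) (IHg _ _ H); tauto.
- move=> f IHf g IHg e e' H; rewrite (IHf _ _ H) (IHg _ _ H); tauto.
- move=> f IHf g IHg e e' H; rewrite (IHf _ _ H) (IHg _ _ H); tauto.
- move=> i f IH e e' H; split=> Hs v; apply: (proj1 (IH _ _ _) (Hs v)) => j; rewrite /upd;
    case: (Nat.eqb j i) => //.
- move=> i f IH e e' H; split=> -[v Hs]; exists v; apply: (proj1 (IH _ _ _) Hs) => j; rewrite /upd;
    case: (Nat.eqb j i) => //.
Qed.

Lemma sat_ext_imp f (e e' : nat -> B) : (forall i, e i = e' i) -> sat f e -> sat f e'.
Proof. by move=> H; rewrite (sat_ext f H). Qed.


Fixpoint shT (n : nat) (t : term) : term :=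
  match t with
  | TVar i => TVar (i + n) | TZero => TZero | TOne => TOne
  | TPlus t u => TPlus (shT n t) (shT n u) | TTimes t u => TTimes (shT n t) (shT n u) end.
Fixpoint shF (n : nat) (f : form) : form :=
  match f with
  | FEq t u => FEq (shT n t) (shT n u) | FLt t u => FLt (shT n t) (shT n u)
  | FBot => FBot | FImp f g => FImp (shF n f) (shF n g)
  | FAnd f g => FAnd (shF n f) (shF n g) | FOr f g => FOr (shF n f) (shF n g)
  | FAll i f => FAll (i + n) (shF n f) | FEx i f => FEx (i + n) (shF n f) end.

Lemma evalT_sh (e : nat -> B) n t : evalT e (shT n t) = evalT (fun i => e (i + n)) t.
Proof. by elim: t => //= [t1 -> t2 ->|t1 -> t2 ->]. Qed.

Lemma eqb_addr i j n : Nat.eqb (j + n) (i + n) = Nat.eqb j i.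
Proof.
case: (Nat.eqb_spec j i) => [->|H]; first by apply/Nat.eqb_eq.
by apply/Nat.eqb_neq; lia.
Qed.

Lemma sat_sh n f : forall (e : nat -> B), sat (shF n f) e <-> sat f (fun i => e (i + n)).
Proof.
elim: f => /=.
- by move=> t u e; rewrite !evalT_sh.
- by move=> t u e; rewrite !evalT_sh.
- by [].
- move=> f IHf g IHg e; rewrite IHf IHg; tauto.
- move=> f IHf g IHg e; rewrite IHf IHg; tauto.
- move=> f IHf g IHg e; rewrite IHf IHg; tauto.
- move=> i f IH e; split=> Hs v; have := Hs v; rewrite IH; apply: sat_ext_imp;
    move=> j; rewrite /upd eqb_addr //.
- move=> i f IH e; split=> -[v Hs]; exists v; move: Hs; rewrite IH; apply: sat_ext_imp;
    move=> j; rewrite /upd eqb_addr //.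
Qed.

Fixpoint callb (n j : nat) (xs : seq nat) (g : form) : form :=
  match xs with
  | [::] => g
  | x :: xs' => FEx (n + j) (FAnd (FEq (TVar (n + j)) (TVar x)) (callb n j.+1 xs' g))
  end.
Definition call n f xs := callb n 0 xs (shF n f).

Lemma sat_callb n (xs : seq nat) : all (fun x => x < n) xs -> forall j g (e : nat -> B),
  sat (callb n j xs g) e <->
  sat g (fun i => if (n + j <= i) && (i < n + j + size xs) then e (nth 0 xs (i - (n + j))) else e i).
Proof.
elim: xs => [|x xs IH] Hxs j g e /=.
  apply: sat_ext => i; case: ifP => //; lia.
move: Hxs => /= /andP[Hx Hxs'].
have E1 : forall v, upd e (n + j) v (n + j) = v by move=> v; rewrite /upd Nat.eqb_refl.
have E2 : forall v, upd e (n + j) v x = e x by move=> v; rewrite /upd; have /Nat.eqb_neq -> : x <> n + j by lia.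
have HH : forall k, k < size xs -> nth 0 xs k < n.
  by move=> k Hk; move/allP: Hxs'; apply; apply: mem_nth.
have Hpt : forall i,
  (if (n + j.+1 <= i) && (i < n + j.+1 + size xs)
   then upd e (n + j) (e x) (nth 0 xs (i - (n + j.+1))) else upd e (n + j) (e x) i) =
  (if (n + j <= i) && (i < n + j + size (x :: xs)) then e (nth 0 (x :: xs) (i - (n + j))) else e i).
  move=> i; rewrite /upd /=.
  case: (ltngtP i (n + j)) => Hi.
  + have /Nat.eqb_neq -> : i <> n + j by lia.
    do 2 (case: ifP => ? //; try lia).
  + case: ifP => H1.
    * have Hk : i - (n + j.+1) < size xs by move: H1 => /andP[]; lia.
      have := HH _ Hk.
      case: (Nat.eqb_spec (nth 0 xs (i - (n + j.+1))) (n + j)) => [E|_] Hlt; first lia.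
      case: ifP => H2; last lia.
      by have -> : i - (n + j) = (i - (n + j.+1)).+1 by lia.
    * have /Nat.eqb_neq -> : i <> n + j by lia.
      case: ifP => H2 //; lia.
  + subst i; rewrite Nat.eqb_refl.
    case: ifP; first lia.
    case: ifP; last lia.
    by rewrite subnn.
split.
- move=> [v []]; rewrite E1 E2 => -> /(IH Hxs') Hs; apply: (sat_ext_imp _ Hs) => i.
  exact: Hpt.
- move=> Hs; exists (e x); rewrite E1 E2; split => //.
  apply/(IH Hxs'); apply: (sat_ext_imp _ Hs) => i.
  by rewrite Hpt.
Qed.

Definition callenv (e : nat -> B) n xs := fun i => if i < size xs then e (nth 0 xs i) else e (i + n).

Lemma sat_call n f (xs : seq nat) (e : nat -> B) : all (fun x => x < n) xs ->
  sat (call n f xs) e <-> sat f (callenv e n xs).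
Proof.
move=> H; rewrite /call sat_callb // sat_sh; apply: sat_ext => i.
rewrite /callenv addn0 addnK; case: ifP => H1; case: ifP => H2 //; move: H1 H2; lia.
Qed.


Fixpoint occT (i : nat) (t : term) : bool :=
  match t with
  | TVar j => j == i | TZero => false | TOne => false
  | TPlus t u => occT i t || occT i u | TTimes t u => occT i t || occT i u end.
Fixpoint occF (i : nat) (f : form) : bool :=
  match f with
  | FEq t u => occT i t || occT i u | FLt t u => occT i t || occT i u
  | FBot => false | FImp f g => occF i f || occF i g
  | FAnd f g => occF i f || occF i g | FOr f g => occF i f || occF i g
  | FAll j f => (j == i) || occF i f | FEx j f => (j == i) || occF i f end.

Lemma evalT_coinc t (e e' : nat -> B) : (forall i, occT i t -> e i = e' i) -> evalT e t = evalT e' t.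
Proof.
elim: t => //= [j H|t1 IH1 t2 IH2 H|t1 IH1 t2 IH2 H]; first by apply: H.
- by rewrite IH1 ?IH2 // => i Hi; apply: H; by rewrite Hi ?orbT.
- by rewrite IH1 ?IH2 // => i Hi; apply: H; by rewrite Hi ?orbT.
Qed.

Lemma sat_coinc f : forall (e e' : nat -> B), (forall i, occF i f -> e i = e' i) -> (sat f e <-> sat f e').
Proof.
elim: f => /=.
- move=> t u e e' H; rewrite (@evalT_coinc t e e') ?(@evalT_coinc u e e') // => i Hi; apply: H; by rewrite Hi ?orbT.
- move=> t u e e' H; rewrite (@evalT_coinc t e e') ?(@evalT_coinc u e e') // => i Hi; apply: H; by rewrite Hi ?orbT.
- by [].
- move=> f IHf g IHg e e' H; rewrite (IHf e e') ?(IHg e e'); first tauto;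
    by move=> i Hi; apply: H; by rewrite Hi ?orbT.
- move=> f IHf g IHg e e' H; rewrite (IHf e e') ?(IHg e e'); first tauto;
    by move=> i Hi; apply: H; by rewrite Hi ?orbT.
- move=> f IHf g IHg e e' H; rewrite (IHf e e') ?(IHg e e'); first tauto;
    by move=> i Hi; apply: H; by rewrite Hi ?orbT.
- move=> j f IH e e' H; split=> Hs v; apply: (proj1 (IH (upd e j v) (upd e' j v) _) (Hs v)) ||
    apply: (proj2 (IH (upd e j v) (upd e' j v) _) (Hs v));
    move=> i Hi; rewrite /upd; case: (Nat.eqb_spec i j) => // Hij; apply: H; rewrite Hi orbT //.
- move=> j f IH e e' H; split=> -[v Hs]; exists v;
    [apply: (proj1 (IH (upd e j v) (upd e' j v) _) Hs)|apply: (proj2 (IH (upd e j v) (upd e' j v) _) Hs)];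
    move=> i Hi; rewrite /upd; case: (Nat.eqb_spec i j) => // Hij; apply: H; rewrite Hi orbT //.
Qed.

Lemma occT_sh i n t : occT i (shT n t) -> n <= i.
Proof.
elim: t => //= [j /eqP <-|t1 IH1 t2 IH2 /orP[]|t1 IH1 t2 IH2 /orP[]] //; try by auto.
by rewrite leq_addl.
Qed.

Lemma occF_sh i n f : occF i (shF n f) -> n <= i.
Proof.
elim: f => //= [t u /orP[]|t u /orP[]|f IH g IH' /orP[]|f IH g IH' /orP[]|f IH g IH' /orP[]|j f IH /orP[]|j f IH /orP[]];
  try (by apply: occT_sh); try (by auto); by move/eqP<-; rewrite leq_addl.
Qed.

Lemma occF_callb i n j xs g : i < n -> i \notin xs -> occF i (callb n j xs g) = occF i g.
Proof.
elim: xs j => //= x xs IH j Hi; rewrite inE negb_or => /andP[Hx Hxs].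
rewrite IH //; have -> : (n + j == i) = false by apply/eqP; lia.
by rewrite eq_sym (negbTE Hx).
Qed.

Lemma occF_call i n f xs : i < n -> i \notin xs -> occF i (call n f xs) = false.
Proof.
move=> Hi Hx; rewrite /call occF_callb //; apply/negP => /occF_sh; lia.
Qed.

End Syn.

Lemma primeN_iff q : (1 < q /\ forall a b, q = a * b -> a = 1 \/ b = 1) <-> prime q.
Proof.
split.
- move=> [H1 H]; apply/primeP; split=> // d /dvdnP [k Hk].
  case: (H k d); first by rewrite Hk.
  + by move=> Ek; rewrite Hk Ek mul1n eqxx orbT.
  + by move=> ->.
- move=> Hp; split; first exact: prime_gt1.
  move=> a b Hq; move/primeP: Hp => [H1 H].
  have : a %| q by rewrite Hq dvdn_mulr.
  move/H => /orP[/eqP->|/eqP Ea]; first by left.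
  right; move: Hq; rewrite Ea => Hq.
  have Hq0 : 0 < q by lia.
  by apply/eqP; rewrite -(eqn_pmul2l Hq0) muln1 -Hq.
Qed.

Definition Tn s := (s * s.+1)./2.
Lemma TnS s : Tn s.+1 = Tn s + s.+1.
Proof.
rewrite /Tn.
have -> : s.+1 * s.+2 = s * s.+1 + (s.+1).*2 by rewrite -muln2; nia.
by rewrite halfD odd_double andbF add0n doubleK.
Qed.
Lemma Tn_mono s s' : s <= s' -> Tn s <= Tn s'.
Proof. by move=> H; rewrite /Tn half_leq // leq_mul. Qed.
Lemma Tn_ge s : s <= Tn s.
Proof. case: s => // s; rewrite TnS; lia. Qed.

Lemma pairN_E x y : pairN x y = Tn (x + y) + y. Proof. by []. Qed.

Lemma pairN_lt x y x' y' : x <= x' -> y <= y' -> (x < x') || (y < y') -> pairN x y < pairN x' y'.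
Proof.
move=> Hx Hy /orP[H|H]; rewrite !pairN_E.
- have H1 : (x + y).+1 <= x' + y' by lia.
  have := Tn_mono H1; rewrite TnS; lia.
- have := Tn_mono (leq_add Hx Hy); lia.
Qed.

Lemma pairN_le x y x' y' : x <= x' -> y <= y' -> pairN x y <= pairN x' y'.
Proof. move=> Hx Hy; rewrite !pairN_E; have := Tn_mono (leq_add Hx Hy); lia. Qed.

Lemma pairN_inj x y x' y' : pairN x y = pairN x' y' -> x = x' /\ y = y'.
Proof.
rewrite !pairN_E => E.
have Hs : x + y = x' + y'.
  case: (ltngtP (x + y) (x' + y')) => // H.
  - have := Tn_mono H; rewrite TnS; lia.
  - have := Tn_mono H; rewrite TnS; lia.
move: E; rewrite Hs => E; lia.
Qed.

Lemma pairN_geL x y : x <= pairN x y. Proof. rewrite pairN_E; have := Tn_ge (x + y); lia. Qed.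
Lemma pairN_geR x y : y <= pairN x y. Proof. rewrite pairN_E; lia. Qed.

Lemma tripN_inj a b d a' b' d' : tripN a b d = tripN a' b' d' -> [/\ a = a', b = b' & d = d'].
Proof. rewrite /tripN => /pairN_inj [H1 /pairN_inj [H2 H3]]. by split. Qed.

Lemma memN_lt x c : memN x c -> x < c.
Proof.
rewrite /memN => H; case: (ltnP c (2 ^ x)) => Hc.
  by rewrite divn_small in H.
apply: leq_trans Hc; exact: ltn_expl.
Qed.

Lemma memN_code (X : nat -> Prop) L : exists c, c < 2 ^ L /\ forall t, memN t c <-> (t < L /\ X t).
Proof.
elim: L => [|L [c [Hc H]]].
  by exists 0; split => // t; rewrite /memN div0n; split => // -[].
have Hsm : forall t, L <= t -> c %/ 2 ^ t = 0.
  move=> t Ht; apply: divn_small; apply: leq_trans Hc _; exact: leq_pexp2l.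
case: (classic (X L)) => HX.
- exists (c + 2 ^ L); split; first by rewrite expnS; lia.
  move=> t; case: (ltngtP t L) => Ht.
  + have E : (t < L.+1 /\ X t) <-> (t < L /\ X t) by split=> -[? ?]; split=> //; lia.
    rewrite E -H /memN.
    have -> : 2 ^ L = 2 ^ t * 2 ^ (L - t) by rewrite -expnD subnKC // ltnW.
    rewrite [c + _]addnC mulnC divnMDl ?expn_gt0 // oddD oddX.
    have -> : (L - t == 0) = false by apply/eqP; lia.
    by rewrite /=; split.
  + rewrite /memN.
    have -> : (c + 2 ^ L) %/ 2 ^ t = 0.
      apply: divn_small; apply: (@leq_trans (2 ^ L.+1)); first by rewrite expnS; lia.
      exact: leq_pexp2l.
    by split => // -[]; lia.
  + subst t; rewrite /memN divnDr ?dvdnn // divnn expn_gt0 /= Hsm //.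
- exists c; split; first by rewrite expnS; lia.
  move=> t; case: (ltngtP t L) => Ht.
  + by rewrite H; split => -[]; split=> //; lia.
  + by rewrite /memN (Hsm t (ltnW Ht)); split => // -[]; lia.
  + by subst t; rewrite /memN Hsm //; split => // -[].
Qed.

Lemma codeN (Psi : nat -> nat -> nat -> Prop) J :
  (forall b, b < J -> exists K, forall a d, Psi a b d -> a < K /\ d < K) ->
  exists c, forall a b d, memN (tripN a b d) c <-> (b < J /\ Psi a b d).
Proof.
move=> HK.
have [K HKu] : exists K, forall b a d, b < J -> Psi a b d -> a < K /\ d < K.
  elim: J HK => [|J IH] HK; first by exists 0 => b a d.
  have [K1 H1] := IH (fun b Hb => HK b (ltnW Hb)).
  have [K2 H2] := HK J (ltnSn J).
  exists (K1 + K2) => b a d Hb Hp.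
  case: (ltngtP b J) => Hbj.
  - have := H1 b a d Hbj Hp; lia.
  - lia.
  - subst b; have := H2 a d Hp; lia.
pose X t := exists a b d, t = tripN a b d /\ b < J /\ Psi a b d.
have [c [_ Hc]] := memN_code X (tripN K J K).
exists c => a b d; rewrite Hc; split.
- move=> [_ [a' [b' [d' [E [Hb Hp]]]]]]; have [-> -> ->] := tripN_inj E; by [].
- move=> [Hb Hp]; split; last by exists a, b, d.
  have [Ha Hd] := HKu b a d Hb Hp.
  rewrite /tripN; apply: pairN_lt; [lia| |by rewrite Ha].
  apply: ltnW; apply: pairN_lt; [lia|lia|by rewrite Hb].
Qed.

Lemma tripN_geR a b d : d <= tripN a b d.
Proof. rewrite /tripN; apply: leq_trans (pairN_geR _ _) (pairN_geR _ _). Qed.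
Lemma tripN_geM a b d : b <= tripN a b d.
Proof. rewrite /tripN; apply: leq_trans (pairN_geL _ _) (pairN_geR _ _). Qed.
Lemma tripN_geL a b d : a <= tripN a b d.
Proof. exact: pairN_geL. Qed.

Lemma sum_eq1 N y (f : nat -> nat) : y < N -> \sum_(n < N) (n == y :> nat) * f n = f y.
Proof.
move=> Hy; rewrite (bigD1 (Ordinal Hy)) //= eqxx mul1n big1 ?addn0 // => i Hi.
have -> : (nat_of_ord i == y) = false.
  apply/negP => /eqP E; move/negP: Hi; apply; apply/eqP; apply: val_inj => /=; exact: E.
by rewrite mul0n.
Qed.

Lemma sumN_const c1 c2 p r x y :
  (forall q m n, memN (tripN p q m) c1 -> memN (tripN q r n) c2 -> m = x /\ n = y) ->
  sumN c1 c2 p r = (\sum_(q < c2.+1) (memN (tripN p q x) c1 && memN (tripN q r y) c2)) * (x * y).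
Proof.
move=> H; rewrite /sumN big_distrl /=; apply: eq_bigr => q _.
case: (boolP (memN (tripN p q x) c1 && memN (tripN q r y) c2)) => [/andP[H1 H2]|Hn].
- have Hx : x < c1.+1 by have := memN_lt H1; have := tripN_geR p q x; lia.
  have Hy : y < c2.+1 by have := memN_lt H2; have := tripN_geR q r y; lia.
  rewrite mul1n.
  transitivity (\sum_(m < c1.+1) (m == x :> nat) * ((x * y))).
    apply: eq_bigr => m _.
    transitivity (\sum_(n < c2.+1) (n == y :> nat) * ((m == x :> nat) * (x * y))).
      apply: eq_bigr => n _.
      case: (boolP (memN (tripN p q m) c1 && memN (tripN q r n) c2)) => [/andP[G1 G2]|G].
      + have [Em En] := H _ _ _ G1 G2; by rewrite Em En !eqxx /= !mul1n.
      + rewrite mul0n; case: (boolP (nat_of_ord n == y)) => [/eqP En|]; last by rewrite mul0n.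
        case: (boolP (nat_of_ord m == x)) => [/eqP Em|]; last by rewrite mul0n muln0.
        by move: G; rewrite En Em H1 H2.
    by rewrite (sum_eq1 (fun _ => (m == x :> nat) * (x * y))).
  by rewrite (sum_eq1 (fun _ => x * y)).
- rewrite mul0n big1 // => m _; rewrite big1 // => n _.
  case: (boolP (memN (tripN p q m) c1 && memN (tripN q r n) c2)) => [/andP[G1 G2]|]; last by rewrite mul0n.
  have [Em En] := H _ _ _ G1 G2; move: Hn; by rewrite -Em -En G1 G2.
Qed.

Lemma sum_count N (b : nat -> bool) : \sum_(q < N) b q = count b (iota 0 N).
Proof.
elim: N => [|N IH]; first by rewrite big_ord0.
have -> : iota 0 N.+1 = iota 0 N ++ [:: N] by rewrite -addn1 iotaD.
by rewrite big_ord_recr /= IH count_cat /= addn0.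
Qed.

Lemma count_primes_le N P : P < N ->
  count (fun q => prime q && (q <= P)) (iota 0 N) = count prime (iota 0 P.+1).
Proof.
move=> H; have -> : N = P.+1 + (N - P.+1) by lia.
rewrite iotaD count_cat.
rewrite (@eq_in_count _ _ prime (iota 0 P.+1)); last first.
  by move=> q; rewrite mem_iota => /andP[_ Hq]; rewrite (_ : q <= P) ?andbT //; lia.
rewrite (@eq_in_count _ _ pred0 (iota (0 + P.+1) _)); last first.
  by move=> q; rewrite mem_iota => /andP[Hq _]; rewrite (_ : q <= P = false) ?andbF //; apply/negP; lia.
by rewrite count_pred0 addn0.
Qed.

Lemma count_mem_iota N (s : seq nat) : uniq s -> all (fun q => q < N) s ->
  count (mem s) (iota 0 N) = size s.
Proof.
move=> Hu /allP Ha; rewrite -size_filter; apply: perm_size; apply: uniq_perm.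
- by apply: filter_uniq; apply: iota_uniq.
- exact: Hu.
- move=> q; rewrite mem_filter mem_iota /=; case Hq: (q \in s) => //=.
  by have := Ha q Hq; lia.
Qed.

Local Notation v := TVar.
Definition tnum n := iter n (fun t => TPlus t TOne) TZero.
Notation FNot f := (FImp f FBot).
Notation FIff f g := (FAnd (FImp f g) (FImp g f)).
Notation FLe t u := (FOr (FLt t u) (FEq t u)).
Definition FAlls (l : seq nat) f := foldr FAll f l.

Definition Fprime x := FAnd (FLt TOne (v x)) (FAll 12 (FAll 13
   (FImp (FEq (v x) (TTimes (v 12) (v 13))) (FOr (FEq (v 12) TOne) (FEq (v 13) TOne))))).

Opaque call.
Definition FIn x := FOr (FEq (v x) (v 9)) (FOr (FEq (v x) (v 10)) (FEq (v x) (v 11))).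
Definition FST fS x y := FEx 9 (FEx 10 (FEx 11 (FAnd (call 20 fS [::9;10;11]) (FAnd (FIn x) (FIn y))))).
Definition Phi fS := FAnd (Fprime 0) (FAnd (Fprime 1) (FAnd (FNot (FEq (v 2) TZero))
  (FOr (FAnd (FLe (v 0) (v 7)) (FAnd (FLe (v 1) (v 7)) (FEq (TTimes (v 8) (v 2)) (v 6))))
  (FOr (FAnd (FST fS 0 1) (FEq (TTimes (tnum 3) (v 2)) (v 6)))
       (FAnd (FEq (v 0) (v 1)) (FAnd (FLt (v 7) (v 0)) (FAnd (FNot (FST fS 0 0)) (FEq (v 2) (v 6))))))))).
Definition GOOD fS fmem := FAll 3 (FImp (FAll 1 (FImp (FLt (v 1) (v 3)) (FEx 4 (FAll 0 (FAll 2
   (FImp (Phi fS) (FAnd (FLt (v 0) (v 4)) (FLt (v 2) (v 4))))))))) (FEx 5 (FAll 0 (FAll 1 (FAll 2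
   (FIff (call 20 fmem [::0;1;2;5]) (FAnd (FLt (v 1) (v 3)) (Phi fS)))))))).

Lemma occ_Phi fS i : i \in [:: 3; 4; 5] -> occF i (Phi fS) = false.
Proof.
rewrite !inE => /orP[/eqP->|/orP[/eqP->|/eqP->]]; rewrite /Phi /FST /FIn /Fprime /= !occF_call //.
Qed.

Section Tr.
Variable B : arith_struct.
Hypothesis HB : models_ThN B.
Let z0 := fun _ : nat => zeroS B.

Lemma t_mul0 : forall x : B, zeroS B = mulS x (zeroS B).
Proof.
refine (HB (f:=FAll 0 (FEq TZero (TTimes (v 0) TZero))) _ z0).
move=> e; cbn; move=> x; by rewrite muln0.
Qed.

Lemma t_0mul : forall x : B, mulS (zeroS B) x = zeroS B.
Proof.
refine (HB (f:=FAll 0 (FEq (TTimes TZero (v 0)) TZero)) _ z0).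
move=> e; cbn; move=> x; by rewrite mul0n.
Qed.

Lemma t_mulDr : forall x y z : B, mulS x (addS y z) = addS (mulS x y) (mulS x z).
Proof.
refine (HB (f:=FAlls [::0;1;2] (FEq (TTimes (v 0) (TPlus (v 1) (v 2))) (TPlus (TTimes (v 0) (v 1)) (TTimes (v 0) (v 2))))) _ z0).
move=> e; cbn; move=> x y z; by rewrite mulnDr.
Qed.

Lemma t_mulA : forall x y z : B, mulS (mulS x y) z = mulS x (mulS y z).
Proof.
refine (HB (f:=FAlls [::0;1;2] (FEq (TTimes (TTimes (v 0) (v 1)) (v 2)) (TTimes (v 0) (TTimes (v 1) (v 2))))) _ z0).
move=> e; cbn; move=> x y z; by rewrite mulnA.
Qed.

Lemma t_ringid : forall t x y : B, mulS t (mulS (mulS t x) y) = mulS (mulS t x) (mulS t y).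
Proof.
refine (HB (f:=FAlls [::0;1;2] (FEq (TTimes (v 0) (TTimes (TTimes (v 0) (v 1)) (v 2))) (TTimes (TTimes (v 0) (v 1)) (TTimes (v 0) (v 2))))) _ z0).
move=> e; cbn; move=> t x y; nia.
Qed.

Lemma t_dvdsub : forall a k1 k2 z : B, addS (mulS a k2) z = mulS a k1 -> exists k, z = mulS a k.
Proof.
refine (HB (f:=FAlls [::0;1;2;3] (FImp (FEq (TPlus (TTimes (v 0) (v 2)) (v 3)) (TTimes (v 0) (v 1)))
   (FEx 4 (FEq (v 3) (TTimes (v 0) (v 4)))))) _ z0).
move=> e; cbn; move=> a k1 k2 z H; exists (k1 - k2); rewrite mulnBr; lia.
Qed.

Lemma t_cancel : forall t x y : B, t <> zeroS B -> mulS t x = mulS t y -> x = y.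
Proof.
refine (HB (f:=FAlls [::0;1;2] (FImp (FNot (FEq (v 0) TZero)) (FImp (FEq (TTimes (v 0) (v 1)) (TTimes (v 0) (v 2))) (FEq (v 1) (v 2))))) _ z0).
move=> e; cbn; move=> t x y H1 H2; apply/eqP; rewrite -(eqn_pmul2l (m := t)); [by apply/eqP | lia].
Qed.

Lemma t_three : numB B 3 <> zeroS B.
Proof.
refine (HB (f:=FNot (FEq (tnum 3) TZero)) _ z0).
by move=> e /=.
Qed.

Lemma t_1mul : forall x : B, mulS (oneS B) x = x.
Proof. refine (HB (f:=FAll 0 (FEq (TTimes TOne (v 0)) (v 0))) _ z0). by move=> e; cbn; move=> x; lia. Qed.

Lemma t_0add : forall x : B, addS (zeroS B) x = x.
Proof. refine (HB (f:=FAll 0 (FEq (TPlus TZero (v 0)) (v 0))) _ z0). by move=> e; cbn; move=> x. Qed.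

Lemma t_add0 : forall x : B, addS x (zeroS B) = x.
Proof. refine (HB (f:=FAll 0 (FEq (TPlus (v 0) TZero) (v 0))) _ z0). by move=> e; cbn; move=> x; rewrite addn0. Qed.

Lemma t_addcancel : forall x y z : B, addS x y = addS x z -> y = z.
Proof.
refine (HB (f:=FAlls [::0;1;2] (FImp (FEq (TPlus (v 0) (v 1)) (TPlus (v 0) (v 2))) (FEq (v 1) (v 2)))) _ z0).
move=> e; cbn; move=> x y z; lia.
Qed.

Lemma t_leadd : forall x y : B, leB x (addS x y).
Proof.
refine (HB (f:=FAlls [::0;1] (FLe (v 0) (TPlus (v 0) (v 1)))) _ z0).
move=> e; cbn; move=> x y; case: y => [|y]; [right; lia|left; lia].
Qed.

Lemma t_ltmul : forall t x y : B, t <> zeroS B -> ltS x y -> ltS (mulS t x) (mulS t y).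
Proof.
refine (HB (f:=FAlls [::0;1;2] (FImp (FNot (FEq (v 0) TZero)) (FImp (FLt (v 1) (v 2)) (FLt (TTimes (v 0) (v 1)) (TTimes (v 0) (v 2)))))) _ z0).
move=> e; cbn; move=> t x y H1 H2; nia.
Qed.

Lemma t_trich : forall x y : B, ltS x y \/ x = y \/ ltS y x.
Proof.
refine (HB (f:=FAlls [::0;1] (FOr (FLt (v 0) (v 1)) (FOr (FEq (v 0) (v 1)) (FLt (v 1) (v 0))))) _ z0).
move=> e; cbn; move=> x y; case: (ltngtP x y); auto.
Qed.

Lemma t_asym : forall x y : B, ltS x y -> ~ leB y x.
Proof.
refine (HB (f:=FAlls [::0;1] (FImp (FLt (v 0) (v 1)) (FNot (FLe (v 1) (v 0))))) _ z0).
move=> e; cbn; move=> x y H [H'|H']; lia.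
Qed.

Lemma t_two_prime : primeB (numB B 2).
Proof.
refine (HB (f:=FAll 0 (FImp (FEq (v 0) (tnum 2)) (Fprime 0))) _ z0 (numB B 2) erefl).
move=> e; cbn; move=> x ->; split=> [|a b H]; first lia.
have {}H : a * b = 2 by lia.
case: a H => [|[|[|a]]] H; try lia.
Qed.

Lemma t_distinct : forall a b w : B, primeB w ->
  addS (mulS (numB B 3) a) (mulS (numB B 5) b) = mulS (numB B 2) w ->
  [/\ a <> b, b <> w & a <> w].
Proof.
move=> a b w Hp E.
pose F := FAlls [::0;1;2] (FImp (Fprime 2) (FImp (FEq (TPlus (TTimes (tnum 3) (v 0)) (TTimes (tnum 5) (v 1))) (TTimes (tnum 2) (v 2)))
   (FAnd (FNot (FEq (v 0) (v 1))) (FAnd (FNot (FEq (v 1) (v 2))) (FNot (FEq (v 0) (v 2))))))).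
have HN : forall e, sat (B:=natS) F e.
  move=> e; cbn; move=> x y z [H1 H2] E'; split; [|split]; move=> Exy; subst; try lia.
  have := H2 2 (y.*2); rewrite -muln2; case; lia.
have := HB HN z0 a b w Hp E; cbn.
by move=> [? [? ?]]; split.
Qed.

Lemma t_lemul : forall t d : B, t <> zeroS B -> leB d (mulS t d).
Proof.
refine (HB (f:=FAlls [::0;1] (FImp (FNot (FEq (v 0) TZero)) (FLe (v 1) (TTimes (v 0) (v 1))))) _ z0).
move=> e; cbn; move=> t d H; case: (ltngtP d (t * d)) => H'; [left|nia|right] => //.
Qed.

Lemma t_bound : forall Q P b u w y x : B,
  (leB x Q \/ leB x P \/ x = b \/ x = u \/ x = w \/ x = y) ->
  ltS x (addS (addS (addS (addS (addS (addS Q P) b) u) w) y) (oneS B)).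
Proof.
refine (HB (f:=FAlls [::0;1;2;3;4;5;6] (FImp (FOr (FLe (v 6) (v 0)) (FOr (FLe (v 6) (v 1)) (FOr (FEq (v 6) (v 2))
   (FOr (FEq (v 6) (v 3)) (FOr (FEq (v 6) (v 4)) (FEq (v 6) (v 5)))))))
   (FLt (v 6) (TPlus (TPlus (TPlus (TPlus (TPlus (TPlus (v 0) (v 1)) (v 2)) (v 3)) (v 4)) (v 5)) TOne)))) _ z0).
move=> e; cbn; move=> Q P b u w y x; lia.
Qed.

Lemma t_ltS : forall x : B, ltS x (addS x (oneS B)).
Proof. refine (HB (f:=FAll 0 (FLt (v 0) (TPlus (v 0) TOne))) _ z0). move=> e; cbn; move=> x; lia. Qed.


Lemma call_gen (A : arith_struct) f (R : (nat -> A) -> Prop) (HR : forall e, sat f e <-> R e) e xs :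
  all (fun x => x < 20) xs -> (sat (call 20 f xs) e <-> R (callenv e 20 xs)).
Proof. by move=> H; rewrite sat_call. Qed.

Section Calls.
Variables (fpow fnth fmem fsum : form) (pow2 : B -> B) (nthp : B -> B -> Prop)
  (memB : B -> B -> B -> B -> Prop) (sumB : B -> B -> B -> B -> B).
Hypothesis HpN : forall e, sat (B:=natS) fpow e <-> e 1 = 2 ^ e 0.
Hypothesis HpB : forall e, sat fpow e <-> e 1 = pow2 (e 0).
Hypothesis HnN : forall e, sat (B:=natS) fnth e <-> nthPrimeN (e 0) (e 1).
Hypothesis HnB : forall e, sat fnth e <-> nthp (e 0) (e 1).
Hypothesis HmN : forall e, sat (B:=natS) fmem e <-> memN (tripN (e 0) (e 1) (e 2)) (e 3).
Hypothesis HmB : forall e, sat fmem e <-> memB (e 0) (e 1) (e 2) (e 3).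
Hypothesis HsN : forall e, sat (B:=natS) fsum e <-> e 4 = sumN (e 0) (e 1) (e 2) (e 3).
Hypothesis HsB : forall e, sat fsum e <-> e 4 = sumB (e 0) (e 1) (e 2) (e 3).

Lemma cpN (e : nat -> natS) x y : x < 20 -> y < 20 -> (sat (call 20 fpow [::x;y]) e <-> e y = 2 ^ e x).
Proof. move=> Hx Hy; rewrite (call_gen HpN) //= Hx Hy //. Qed.
Lemma cpB (e : nat -> B) x y : x < 20 -> y < 20 -> (sat (call 20 fpow [::x;y]) e <-> e y = pow2 (e x)).
Proof. move=> Hx Hy; rewrite (call_gen HpB) //= Hx Hy //. Qed.
Lemma cnN (e : nat -> natS) x y : x < 20 -> y < 20 -> (sat (call 20 fnth [::x;y]) e <-> nthPrimeN (e x) (e y)).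
Proof. move=> Hx Hy; rewrite (call_gen HnN) //= Hx Hy //. Qed.
Lemma cnB (e : nat -> B) x y : x < 20 -> y < 20 -> (sat (call 20 fnth [::x;y]) e <-> nthp (e x) (e y)).
Proof. move=> Hx Hy; rewrite (call_gen HnB) //= Hx Hy //. Qed.
Lemma cmN (e : nat -> natS) a b d c : a < 20 -> b < 20 -> d < 20 -> c < 20 ->
  (sat (call 20 fmem [::a;b;d;c]) e <-> memN (tripN (e a) (e b) (e d)) (e c)).
Proof. move=> Ha Hb Hd Hc; rewrite (call_gen HmN) //= Ha Hb Hd Hc //. Qed.
Lemma cmB (e : nat -> B) a b d c : a < 20 -> b < 20 -> d < 20 -> c < 20 ->
  (sat (call 20 fmem [::a;b;d;c]) e <-> memB (e a) (e b) (e d) (e c)).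
Proof. move=> Ha Hb Hd Hc; rewrite (call_gen HmB) //= Ha Hb Hd Hc //. Qed.
Lemma csN (e : nat -> natS) a b d c z : a < 20 -> b < 20 -> d < 20 -> c < 20 -> z < 20 ->
  (sat (call 20 fsum [::a;b;d;c;z]) e <-> e z = sumN (e a) (e b) (e d) (e c)).
Proof. move=> Ha Hb Hd Hc Hz; rewrite (call_gen HsN) //= Ha Hb Hd Hc Hz //. Qed.
Lemma csB (e : nat -> B) a b d c z : a < 20 -> b < 20 -> d < 20 -> c < 20 -> z < 20 ->
  (sat (call 20 fsum [::a;b;d;c;z]) e <-> e z = sumB (e a) (e b) (e d) (e c)).
Proof. move=> Ha Hb Hd Hc Hz; rewrite (call_gen HsB) //= Ha Hb Hd Hc Hz //. Qed.

Lemma t_pow_nz : forall x : B, pow2 x <> zeroS B.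
Proof.
pose F := FAlls [::0;1] (FImp (call 20 fpow [::0;1]) (FNot (FEq (v 1) TZero))).
have HN : forall e, sat (B:=natS) F e.
  move=> e; cbn; move=> x y; rewrite cpN //; cbn => -> /eqP; by rewrite expn_eq0.
move=> x; have H := HB HN z0; rewrite /F /FAlls /= in H.
by move: (H x (pow2 x)); rewrite cpB // /upd /=; apply.
Qed.

Lemma t_nth_ge2 : forall k p : B, nthp k p -> leB (numB B 2) p.
Proof.
pose F := FAlls [::0;1] (FImp (call 20 fnth [::0;1]) (FLe (tnum 2) (v 1))).
have HN : forall e, sat (B:=natS) F e.
  move=> e; cbn; move=> x y; rewrite cnN //; cbn => /andP[Hp _].
  have := prime_gt1 Hp; case: (ltngtP 2 y); [left|lia|right] => //.
move=> k p Hk; have H := HB HN z0; rewrite /F /FAlls /= in H.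
by move: (H k p); rewrite cnB // /upd /=; apply.
Qed.


Lemma t_sumA : forall c1 c2 p r x y P K : B, nthp K P ->
  (forall q m n, (memB p q m c1 /\ memB q r n c2) <->
     (primeB q /\ leB q P /\ m = x /\ n = y /\ x <> zeroS B /\ y <> zeroS B)) ->
  sumB c1 c2 p r = mulS (mulS K x) y.
Proof.
pose F := FAlls [::0;1;2;3;4;5;6;7] (FImp (FAnd (call 20 fnth [::7;6])
   (FAlls [::8;9;10] (FIff (FAnd (call 20 fmem [::2;8;9;0]) (call 20 fmem [::8;3;10;1]))
      (FAnd (Fprime 8) (FAnd (FLe (v 8) (v 6)) (FAnd (FEq (v 9) (v 4)) (FAnd (FEq (v 10) (v 5))
         (FAnd (FNot (FEq (v 4) TZero)) (FNot (FEq (v 5) TZero))))))))))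
   (FEx 11 (FAnd (FEq (v 11) (TTimes (TTimes (v 7) (v 4)) (v 5))) (call 20 fsum [::0;1;2;3;11])))).
have HN : forall e, sat (B:=natS) F e.
  move=> e; rewrite /F /FAlls /=; move=> c1 c2 p r x y P K [Hn Hiff].
  move: Hn; rewrite cnN // /upd /= => Hn.
  have Hi : forall q m n, memN (tripN p q m) c1 && memN (tripN q r n) c2 <->
      [/\ prime q, q <= P, m = x, n = y & (x != 0) && (y != 0)].
    move=> q m n; have := Hiff q m n; rewrite !cmN // /upd /= primeN_iff.
    move=> [H1 H2]; split.
    + move=> /andP[G1 G2]; have [Hp [Hle [Hm [Hn' [Hx Hy]]]]] := H1 (conj G1 G2).
      split=> //; first by case: Hle => [/ltnW|->].
      by apply/andP; split; apply/eqP.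
    + move=> [G1 G2 G3 G4 /andP[/eqP G5 /eqP G6]].
      have Hle : q < P \/ q = P by rewrite leq_eqVlt in G2; case/orP: G2 => [/eqP|]; auto.
      have [? ?] := H2 (conj G1 (conj Hle (conj G3 (conj G4 (conj G5 G6))))).
      by apply/andP.
  exists (K * x * y); split; first by rewrite /upd /=.
  rewrite csN // /upd /=.
  rewrite (@sumN_const c1 c2 p r x y); last first.
    by move=> q m n G1 G2; have := (Hi q m n).1; rewrite G1 G2 => /(_ isT) [_ _ -> -> _].
  case: (boolP ((x != 0) && (y != 0))) => Hxy; last first.
    by move: Hxy; rewrite negb_and !negbK => /orP[/eqP->|/eqP->]; rewrite !muln0 ?mul0n.
  have Rb : forall q, memN (tripN p q x) c1 && memN (tripN q r y) c2 = prime q && (q <= P).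
    move=> q; apply/idP/idP; first by move/Hi => [-> -> _ _ _].
    by move/andP => [G1 G2]; apply/Hi; split.
  move: Hn; rewrite /nthPrimeN => /andP[HP /eqP HK].
  have HPc : P < c2.+1.
    have := Rb P; rewrite HP leqnn => /andP[_ G]; have := memN_lt G; have := tripN_geL P r y; lia.
  under eq_bigr => q _ do rewrite Rb.
  by rewrite (sum_count _ (fun q => prime q && (q <= P))) count_primes_le // HK mulnA.
move=> c1 c2 p r x y P K Hk Hiff.
have H := HB HN z0; rewrite /F /FAlls /= in H.
edestruct (H c1 c2 p r x y P K) as [z [Ez Hz]].
  split; first by rewrite cnB // /upd /=.
  by move=> q m n; rewrite !cmB // /upd /=; exact: Hiff q m n.
move: Ez Hz; rewrite csB // /upd /= => -> ->; done.
Qed.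

Lemma t_sum3 : forall c1 c2 p r x y a b w : B, a <> b -> b <> w -> a <> w ->
  (forall q m n, (memB p q m c1 /\ memB q r n c2) <->
     ((q = a \/ q = b \/ q = w) /\ m = x /\ n = y /\ x <> zeroS B /\ y <> zeroS B)) ->
  sumB c1 c2 p r = mulS (mulS (numB B 3) x) y.
Proof.
pose F := FAlls [::0;1;2;3;4;5;6;7;11] (FImp (FAnd (FNot (FEq (v 6) (v 7))) (FAnd (FNot (FEq (v 7) (v 11)))
   (FAnd (FNot (FEq (v 6) (v 11)))
   (FAlls [::8;9;10] (FIff (FAnd (call 20 fmem [::2;8;9;0]) (call 20 fmem [::8;3;10;1]))
      (FAnd (FOr (FEq (v 8) (v 6)) (FOr (FEq (v 8) (v 7)) (FEq (v 8) (v 11))))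
         (FAnd (FEq (v 9) (v 4)) (FAnd (FEq (v 10) (v 5))
         (FAnd (FNot (FEq (v 4) TZero)) (FNot (FEq (v 5) TZero)))))))))))
   (FEx 12 (FAnd (FEq (v 12) (TTimes (TTimes (tnum 3) (v 4)) (v 5))) (call 20 fsum [::0;1;2;3;12])))).
have HN : forall e, sat (B:=natS) F e.
  move=> e; rewrite /F /FAlls /=; move=> c1 c2 p r x y a b w [Hab [Hbw [Haw Hiff]]].
  move: Hab Hbw Haw; rewrite /upd /= => Hab Hbw Haw.
  have Hi : forall q m n, memN (tripN p q m) c1 && memN (tripN q r n) c2 <->
      [/\ q \in [:: a; b; w], m = x, n = y & (x != 0) && (y != 0)].
    move=> q m n; have := Hiff q m n; rewrite !cmN // /upd /=.
    move=> [H1 H2]; split.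
    + move=> /andP[G1 G2]; have [Hq [Hm [Hn' [Hx Hy]]]] := H1 (conj G1 G2).
      split=> //; last by apply/andP; split; apply/eqP.
      by rewrite !inE; case: Hq => [->|[->|->]]; rewrite eqxx ?orbT.
    + move=> [G1 G3 G4 /andP[/eqP G5 /eqP G6]].
      have Hq : q = a \/ q = b \/ q = w by move: G1; rewrite !inE => /orP[/eqP|/orP[/eqP|/eqP]]; auto.
      have [? ?] := H2 (conj Hq (conj G3 (conj G4 (conj G5 G6)))).
      by apply/andP.
  exists (3 * x * y); split; first by rewrite /upd /=.
  rewrite csN // /upd /=.
  rewrite (@sumN_const c1 c2 p r x y); last first.
    by move=> q m n G1 G2; have := (Hi q m n).1; rewrite G1 G2 => /(_ isT) [_ -> -> _].
  case: (boolP ((x != 0) && (y != 0))) => Hxy; last first.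
    by move: Hxy; rewrite negb_and !negbK => /orP[/eqP->|/eqP->]; rewrite !muln0 ?mul0n.
  have Rb : forall q, memN (tripN p q x) c1 && memN (tripN q r y) c2 = (q \in [:: a; b; w]).
    move=> q; apply/idP/idP; first by move/Hi => [-> _ _ _].
    by move=> G; apply/Hi; split.
  under eq_bigr => q _ do rewrite Rb.
  rewrite (sum_count _ (fun q => q \in [:: a; b; w])) count_mem_iota ?mulnA //.
    rewrite /= !inE !negb_or; repeat (apply/andP; split); lia.
  apply/allP => q Hq; have := Rb q; rewrite Hq => /andP[_ G].
  have := memN_lt G; have := tripN_geL q r y; lia.
move=> c1 c2 p r x y a b w Hab Hbw Haw Hiff.
have H := HB HN z0; rewrite /F /FAlls /= in H.
edestruct (H c1 c2 p r x y a b w) as [z [Ez Hz]].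
  split; first by rewrite /upd /=.
  split; first by rewrite /upd /=.
  split; first by rewrite /upd /=.
  by move=> q m n; rewrite !cmB // /upd /=; exact: Hiff q m n.
move: Ez Hz; rewrite csB // /upd /= => -> ->; done.
Qed.

Lemma t_sum1 : forall c1 c2 p r x y a : B,
  (forall q m n, (memB p q m c1 /\ memB q r n c2) <->
     (q = a /\ m = x /\ n = y /\ x <> zeroS B /\ y <> zeroS B)) ->
  sumB c1 c2 p r = mulS x y.
Proof.
pose F := FAlls [::0;1;2;3;4;5;6] (FImp
   (FAlls [::8;9;10] (FIff (FAnd (call 20 fmem [::2;8;9;0]) (call 20 fmem [::8;3;10;1]))
      (FAnd (FEq (v 8) (v 6))
         (FAnd (FEq (v 9) (v 4)) (FAnd (FEq (v 10) (v 5))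
         (FAnd (FNot (FEq (v 4) TZero)) (FNot (FEq (v 5) TZero))))))))
   (FEx 12 (FAnd (FEq (v 12) (TTimes (v 4) (v 5))) (call 20 fsum [::0;1;2;3;12])))).
have HN : forall e, sat (B:=natS) F e.
  move=> e; rewrite /F /FAlls /=; move=> c1 c2 p r x y a Hiff.
  have Hi : forall q m n, memN (tripN p q m) c1 && memN (tripN q r n) c2 <->
      [/\ q \in [:: a], m = x, n = y & (x != 0) && (y != 0)].
    move=> q m n; have := Hiff q m n; rewrite !cmN // /upd /=.
    move=> [H1 H2]; split.
    + move=> /andP[G1 G2]; have [Hq [Hm [Hn' [Hx Hy]]]] := H1 (conj G1 G2).
      split=> //; last by apply/andP; split; apply/eqP.
      by rewrite !inE Hq eqxx.
    + move=> [G1 G3 G4 /andP[/eqP G5 /eqP G6]].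
      have Hq : q = a by move: G1; rewrite !inE => /eqP.
      have [? ?] := H2 (conj Hq (conj G3 (conj G4 (conj G5 G6)))).
      by apply/andP.
  exists (x * y); split; first by rewrite /upd /=.
  rewrite csN // /upd /=.
  rewrite (@sumN_const c1 c2 p r x y); last first.
    by move=> q m n G1 G2; have := (Hi q m n).1; rewrite G1 G2 => /(_ isT) [_ -> -> _].
  case: (boolP ((x != 0) && (y != 0))) => Hxy; last first.
    by move: Hxy; rewrite negb_and !negbK => /orP[/eqP->|/eqP->]; rewrite !muln0 ?mul0n.
  have Rb : forall q, memN (tripN p q x) c1 && memN (tripN q r y) c2 = (q \in [:: a]).
    move=> q; apply/idP/idP; first by move/Hi => [-> _ _ _].
    by move=> G; apply/Hi; split.
  under eq_bigr => q _ do rewrite Rb.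
  rewrite (sum_count _ (fun q => q \in [:: a])) count_mem_iota ?mul1n //.
  apply/allP => q Hq; have := Rb q; rewrite Hq => /andP[_ G].
  have := memN_lt G; have := tripN_geL q r y; lia.
move=> c1 c2 p r x y a Hiff.
have H := HB HN z0; rewrite /F /FAlls /= in H.
edestruct (H c1 c2 p r x y a) as [z [Ez Hz]].
  by move=> q m n; rewrite !cmB // /upd /=; exact: Hiff q m n.
move: Ez Hz; rewrite csB // /upd /= => -> ->; done.
Qed.
End Calls.

Section Good.
Variables (fS fmem : form) (e0 : nat -> B) (S : B -> B -> B -> Prop)
  (memB : B -> B -> B -> B -> Prop).
Hypothesis HSf : forall p q r, S p q r <-> sat fS (env3 p q r e0).
Hypothesis HmN : forall e, sat (B:=natS) fmem e <-> memN (tripN (e 0) (e 1) (e 2)) (e 3).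
Hypothesis HmB : forall e, sat fmem e <-> memB (e 0) (e 1) (e 2) (e 3).

Definition envok (e : nat -> B) := forall k, e (Nat.add 23 k) = e0 k.

Lemma envok_upd e i w : envok e -> i < 23 -> envok (upd e i w).
Proof. move=> H Hi k; rewrite /upd; case: Nat.eqb_spec => [E|_]; [lia|exact: H]. Qed.

Lemma csS (e : nat -> B) x y z : x < 20 -> y < 20 -> z < 20 -> envok e ->
  (sat (call 20 fS [::x;y;z]) e <-> S (e x) (e y) (e z)).
Proof.
move=> Hx Hy Hz He; rewrite sat_call /= ?Hx ?Hy ?Hz // HSf; apply: sat_ext => i.
rewrite /callenv /=; case: i => [|[|[|k]]] //=.
by rewrite -He; congr e; lia.
Qed.

Definition STsem (x y : B) := exists a b c, S a b c /\ (x = a \/ x = b \/ x = c) /\ (y = a \/ y = b \/ y = c).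

Lemma STB e x y : x < 9 -> y < 9 -> envok e -> (sat (FST fS x y) e <-> STsem (e x) (e y)).
Proof.
move=> Hx Hy He; rewrite /FST /=; split.
- move=> [a [b [c [HS [Hi1 Hi2]]]]]; exists a, b, c; move: HS Hi1 Hi2.
  have He' : envok (upd (upd (upd e 9 a) 10 b) 11 c) by do !apply: envok_upd.
  rewrite csS //.
  rewrite /upd /=.
  have -> : Nat.eqb x 11 = false by apply/Nat.eqb_neq; lia.
  have -> : Nat.eqb x 10 = false by apply/Nat.eqb_neq; lia.
  have -> : Nat.eqb x 9 = false by apply/Nat.eqb_neq; lia.
  have -> : Nat.eqb y 11 = false by apply/Nat.eqb_neq; lia.
  have -> : Nat.eqb y 10 = false by apply/Nat.eqb_neq; lia.
  have -> : Nat.eqb y 9 = false by apply/Nat.eqb_neq; lia.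
  by [].
- move=> [a [b [c [HS [Hi1 Hi2]]]]]; exists a, b, c.
  have He' : envok (upd (upd (upd e 9 a) 10 b) 11 c) by do !apply: envok_upd.
  rewrite csS //.
  rewrite /upd /=.
  have -> : Nat.eqb x 11 = false by apply/Nat.eqb_neq; lia.
  have -> : Nat.eqb x 10 = false by apply/Nat.eqb_neq; lia.
  have -> : Nat.eqb x 9 = false by apply/Nat.eqb_neq; lia.
  have -> : Nat.eqb y 11 = false by apply/Nat.eqb_neq; lia.
  have -> : Nat.eqb y 10 = false by apply/Nat.eqb_neq; lia.
  have -> : Nat.eqb y 9 = false by apply/Nat.eqb_neq; lia.
  by [].
Qed.


Definition PhiSem (Q P t a b d : B) := primeB a /\ primeB b /\ d <> zeroS B /\
  ((leB a P /\ leB b P /\ mulS t d = Q) \/ (STsem a b /\ mulS (numB B 3) d = Q) \/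
   (a = b /\ ltS P a /\ ~ STsem a a /\ d = Q)).

Lemma PhiB e : envok e -> (sat (Phi fS) e <-> PhiSem (e 6) (e 7) (e 8) (e 0) (e 1) (e 2)).
Proof.
move=> He; rewrite /Phi.
have E1 : sat (FST fS 0 1) e <-> STsem (e 0) (e 1) by apply: STB.
have E2 : sat (FST fS 0 0) e <-> STsem (e 0) (e 0) by apply: STB.
move: E1 E2; move: (FST fS 0 1) (FST fS 0 0) => F1 F2 E1 E2.
rewrite /= E1 E2.
exact: iff_refl.
Qed.

Lemma good_N : forall e, sat (B:=natS) (GOOD fS fmem) e.
Proof.
move=> e; rewrite /GOOD; have Hocc := occ_Phi fS; move: (Phi fS) Hocc => Ph Hocc.
rewrite /=; move=> J HJ.
pose Psi a b d := sat (B:=natS) Ph (upd (upd (upd (upd e 3 J) 0 a) 1 b) 2 d).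
edestruct (@codeN Psi J) as [c Hc].
  move=> b Hb; edestruct (HJ b) as [K HK]; first by rewrite /upd /=.
  exists K => a d HP.
  rewrite /Psi in HP.
  have HP' : sat Ph (upd (upd (upd (upd (upd e 3 J) 1 b) 4 K) 0 a) 2 d).
    apply: (proj1 (sat_coinc _) HP) => i Hi; rewrite /upd.
    by case: i Hi => [|[|[|[|[|i]]]]] Hi //=; rewrite Hocc in Hi.
  by have := HK a d HP'; rewrite /upd /=.
exists c => a b d.
rewrite (@sat_coinc _ Ph _ (upd (upd (upd (upd e 3 J) 0 a) 1 b) 2 d)); last first.
  move=> i Hi; rewrite /upd.
  by case: i Hi => [|[|[|[|[|[|i]]]]]] Hi //=; rewrite Hocc in Hi.
rewrite cmN //.
exact: (Hc a b d).
Qed.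


Lemma t_good (Q P t J : B) :
  (forall b, ltS b J -> exists K, forall a d, PhiSem Q P t a b d -> ltS a K /\ ltS d K) ->
  exists c, forall a b d, memB a b d c <-> (ltS b J /\ PhiSem Q P t a b d).
Proof.
move=> HK.
pose eB := fun i => if Nat.leb 23 i then e0 (Nat.sub i 23) else
   if Nat.eqb i 6 then Q else if Nat.eqb i 7 then P else if Nat.eqb i 8 then t else zeroS B.
have HeB : envok eB by move=> k; rewrite /eB /=; rewrite Nat.sub_0_r.
have H := HB good_N eB; rewrite /GOOD in H.
have PB := PhiB; move: (Phi fS) PB H => Ph PB H.
rewrite /= in H.
edestruct (H J) as [c Hc].
  move=> b Hb; move: Hb; rewrite /upd /= => Hb.
  have [K HK'] := HK b Hb.
  exists K => a d.
  rewrite PB; last by do !apply: envok_upd.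
  rewrite /upd /=; exact: HK' a d.
exists c => a b d.
have := Hc a b d.
rewrite cmB // PB; last by do !apply: envok_upd.
rewrite /upd /=; exact.
Qed.

End Good.
End Tr.

Theorem lemma4p4
  (B : arith_struct) (HB : models_ThN B) (HBns : nonstandard B)
  (Delta : B) (HDelta : nonstandard_elt Delta)
  (* 2^x in B *)
  (pow2 : B -> B)
  (Hpow2 : interprets (fun e => e 1%N = 2 ^ e 0%N) (fun e => e 1%N = pow2 (e 0%N)))
  (* "p is the k-th prime" in B *)
  (nthp : B -> B -> Prop)
  (Hnthp : interprets (fun e => is_true (nthPrimeN (e 0%N) (e 1%N)))
                      (fun e => nthp (e 0%N) (e 1%N)))
  (* Goedel coding of finite sets of triples, and internal sums, in B *)
  (memB : B -> B -> B -> B -> Prop)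
  (Hmem : interprets (fun e => is_true (memN (tripN (e 0%N) (e 1%N) (e 2%N)) (e 3%N)))
                     (fun e => memB (e 0%N) (e 1%N) (e 2%N) (e 3%N)))
  (sumB : B -> B -> B -> B -> B)
  (Hsum : interprets (fun e => e 4%N = sumN (e 0%N) (e 1%N) (e 2%N) (e 3%N))
                     (fun e => e 4%N = sumB (e 0%N) (e 1%N) (e 2%N) (e 3%N)))
  (* truncated subtraction in B *)
  (monus : B -> B -> B)
  (Hmonus : forall a b : B, (leB b a -> addS b (monus a b) = a) /\
                            (~ leB b a -> monus a b = zeroS B))
  (* P is the 2^Delta-th prime *)
  (P : B) (HP : nthp (pow2 Delta) P)
  (* the definable set S of pairwise disjoint triples *)
  (S : B -> B -> B -> Prop) (HSdef : definable3 S)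
  (HS : forall p q r, S p q r ->
          [/\ primeB p, primeB q, primeB r,
              addS (mulS (numB B 3) p) (mulS (numB B 5) q) = mulS (numB B 2) r
            & [/\ ltS P p, ltS P q & ltS P r]])
  (HSdisj : forall p q r p' q' r', S p q r -> S p' q' r' ->
          (p, q, r) <> (p', q', r') ->
          forall x, (x = p \/ x = q \/ x = r) -> ~ (x = p' \/ x = q' \/ x = r'))
  (* the map epsilon *)
  (eps : B -> B -> B -> B)
  (Heps : forall Q : B,
     (forall n : nat, 0 < n -> dvdB (numB B n) Q /\ dvdB (pow2 (mulS (numB B n) Delta)) Q) ->
     forall p q : B, primeB p -> primeB q ->
     let sameTriple := fun x y : B => exists a b c, S a b c /\
           (x = a \/ x = b \/ x = c) /\ (y = a \/ y = b \/ y = c) in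
     let case1 := leB p P /\ leB q P in
     let case2 := sameTriple p q in
     let case3 := p = q /\ ltS P p /\ ~ sameTriple p p in
     (case1 -> mulS (pow2 Delta) (eps Q p q) = Q) /\
     (case2 -> mulS (numB B 3) (eps Q p q) = Q) /\
     (case3 -> eps Q p q = Q) /\
     (~ case1 -> ~ case2 -> ~ case3 -> eps Q p q = zeroS B)) :
  let inO := fun Q : B => forall n : nat, 0 < n ->
       dvdB (numB B n) Q /\ dvdB (pow2 (mulS (numB B n) Delta)) Q in
  (* O is a <0,+,-.,*>-substructure of B *)
  [/\ inO (zeroS B),
      forall Q1 Q2, inO Q1 -> inO Q2 -> inO (addS Q1 Q2),
      forall Q1 Q2, inO Q1 -> inO Q2 -> inO (monus Q1 Q2)
    & forall Q1 Q2, inO Q1 -> inO Q2 -> inO (mulS Q1 Q2)] /\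
  (* epsilon maps O into good matrices *)
  (forall Q, inO Q -> goodB memB (eps Q)) /\
  (* homomorphism for 0, +, -., * *)
  (forall p q, primeB p -> primeB q -> eps (zeroS B) p q = zeroS B) /\
  (forall Q1 Q2, inO Q1 -> inO Q2 -> forall p q, primeB p -> primeB q ->
      eps (addS Q1 Q2) p q = addS (eps Q1 p q) (eps Q2 p q)) /\
  (forall Q1 Q2, inO Q1 -> inO Q2 -> forall p q, primeB p -> primeB q ->
      eps (monus Q1 Q2) p q = monus (eps Q1 p q) (eps Q2 p q)) /\
  (forall Q1 Q2, inO Q1 -> inO Q2 ->
      matmulB memB sumB (eps Q1) (eps Q2) (eps (mulS Q1 Q2))) /\
  (* embedding: injective *)
  (forall Q1 Q2, inO Q1 -> inO Q2 ->
      (forall p q, primeB p -> primeB q -> eps Q1 p q = eps Q2 p q) -> Q1 = Q2).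
Proof.
move=> inO; rewrite /interprets in Hpow2 Hnthp Hmem Hsum; rewrite /definable3 in HSdef.
case: Hpow2 => fpow [HpN HpB].
case: Hnthp => fnth [HnN HnB].
case: Hmem => fmem [HmN HmB].
case: Hsum => fsum [HsN HsB].
case: HSdef => fS [e0 HSf].
set t := pow2 Delta.
have t_nz : t <> zeroS B := @t_pow_nz _ HB _ _ HpN HpB Delta.
have three_nz : numB B 3 <> zeroS B := t_three HB.
have one_nz : oneS B <> zeroS B.
  move=> E; apply: three_nz; rewrite /= E; rewrite !(t_add0 HB) //.
have dvd0 : forall a : B, dvdB a (zeroS B) by move=> a; exists (zeroS B); exact: (t_mul0 HB).
have dvdD : forall a x y : B, dvdB a x -> dvdB a y -> dvdB a (addS x y).
  by move=> a x y; rewrite /dvdB => -[k1 ->] [k2 ->]; exists (addS k1 k2); rewrite (t_mulDr HB).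
have dvdM : forall a x y : B, dvdB a x -> dvdB a (mulS x y).
  by move=> a x y; rewrite /dvdB => -[k1 ->]; exists (mulS k1 y); rewrite (t_mulA HB).
have dvdB_monus : forall a x y : B, dvdB a x -> dvdB a y -> dvdB a (monus x y).
  move=> a x y; rewrite /dvdB => -[k1 E1] [k2 E2]; have [H1 H2] := Hmonus x y.
  case: (classic (leB y x)) => Hle; last by rewrite H2 //; exists (zeroS B); exact: (t_mul0 HB).
  have := H1 Hle; rewrite {1}E2 {2}E1 => E.
  exact: (t_dvdsub HB E).
have O0 : inO (zeroS B) by move=> n _; split; apply: dvd0.
have OD : forall Q1 Q2, inO Q1 -> inO Q2 -> inO (addS Q1 Q2).
  by move=> Q1 Q2 H1 H2 n Hn; have [? ?] := H1 n Hn; have [? ?] := H2 n Hn; split; apply: dvdD.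
have OB : forall Q1 Q2, inO Q1 -> inO Q2 -> inO (monus Q1 Q2).
  by move=> Q1 Q2 H1 H2 n Hn; have [? ?] := H1 n Hn; have [? ?] := H2 n Hn; split; apply: dvdB_monus.
have OM : forall Q1 Q2, inO Q1 -> inO Q2 -> inO (mulS Q1 Q2).
  by move=> Q1 Q2 H1 H2 n Hn; have [? ?] := H1 n Hn; split; apply: dvdM.
pose ST := STsem S.
have HE : forall Q, inO Q -> forall p q, primeB p -> primeB q ->
   [/\ (leB p P /\ leB q P -> mulS t (eps Q p q) = Q),
       (ST p q -> mulS (numB B 3) (eps Q p q) = Q),
       (p = q /\ ltS P p /\ ~ ST p p -> eps Q p q = Q) &
       (~ (leB p P /\ leB q P) -> ~ ST p q -> ~ (p = q /\ ltS P p /\ ~ ST p p) -> eps Q p q = zeroS B)].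
  by move=> Q HQ p q Hp Hq; case: (Heps Q HQ p q Hp Hq) => H1 [H2 [H3 H4]]; split.
have canc : forall s x y : B, s <> zeroS B -> mulS s x = mulS s y -> x = y.
  by move=> s x y; apply: t_cancel.
have CL : forall p q, primeB p -> primeB q ->
   (exists s, s <> zeroS B /\ forall Q, inO Q -> mulS s (eps Q p q) = Q) \/
   (forall Q, inO Q -> eps Q p q = zeroS B).
  move=> p q Hp Hq.
  case: (classic (leB p P /\ leB q P)) => C1.
    by left; exists t; split=> // Q HQ; have [H1 _ _ _] := HE Q HQ p q Hp Hq; apply: H1.
  case: (classic (ST p q)) => C2.
    by left; exists (numB B 3); split=> // Q HQ; have [_ H2 _ _] := HE Q HQ p q Hp Hq; apply: H2.
  case: (classic (p = q /\ ltS P p /\ ~ ST p p)) => C3.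
    left; exists (oneS B); split=> // Q HQ; have [_ _ H3 _] := HE Q HQ p q Hp Hq.
    by rewrite (t_1mul HB); apply: H3.
  by right => Q HQ; have [_ _ _ H4] := HE Q HQ p q Hp Hq; apply: H4.
have mon00 : monus (zeroS B) (zeroS B) = zeroS B.
  have [H1 _] := Hmonus (zeroS B) (zeroS B).
  by have := H1 (or_intror erefl); rewrite (t_0add HB).
have mon_scale : forall s x y : B, s <> zeroS B -> monus (mulS s x) (mulS s y) = mulS s (monus x y).
  move=> s x y Hs; have [H1 H2] := Hmonus x y; have [G1 G2] := Hmonus (mulS s x) (mulS s y).
  case: (classic (leB y x)) => Hle.
    have E := H1 Hle.
    have E' : addS (mulS s y) (mulS s (monus x y)) = mulS s x by rewrite -(t_mulDr HB) E.
    have Hle' : leB (mulS s y) (mulS s x) by rewrite -E'; apply: (t_leadd HB).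
    by apply: (t_addcancel HB (x := mulS s y)); rewrite G1 // E'.
  rewrite H2 // G2; first exact: (t_mul0 HB).
  have Hlt : ltS x y.
    by case: (t_trich HB x y) => [//|[E|E]]; exfalso; apply: Hle; [right|left].
  exact (t_asym HB (t_ltmul HB Hs Hlt)).
have Hzero : forall p q, primeB p -> primeB q -> eps (zeroS B) p q = zeroS B.
  move=> p q Hp Hq; case: (CL p q Hp Hq) => [[s [Hs Hsv]]|H]; last exact: H.
  by apply: (canc s) => //; rewrite Hsv // -(t_mul0 HB).
have uniqT : forall a b c a' b' c' x, S a b c -> S a' b' c' ->
    (x = a \/ x = b \/ x = c) -> (x = a' \/ x = b' \/ x = c') -> [/\ a = a', b = b' & c = c'].
  move=> a b c a' b' c' x H1 H2 Hx Hx'.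
  case: (classic ((a, b, c) = (a', b', c'))) => [[-> -> ->] //|Hne].
  by exfalso; exact: HSdisj H1 H2 Hne x Hx Hx'.
have STtrans : forall x y z, ST x y -> ST y z -> ST x z.
  move=> x y z [a [b [c [H1 [Hx Hy]]]]] [a' [b' [c' [H2 [Hy' Hz]]]]].
  have [Ea Eb Ec] := uniqT _ _ _ _ _ _ _ H1 H2 Hy Hy'.
  by exists a, b, c; split=> //; split=> //; rewrite Ea Eb Ec.
have STsym : forall x y, ST x y -> ST y x.
  by move=> x y [a [b [c [H1 [Hx Hy]]]]]; exists a, b, c.
have STrefl : forall x y, ST x y -> ST x x.
  by move=> x y [a [b [c [H1 [Hx Hy]]]]]; exists a, b, c.
have memT : forall a b c x, S a b c -> (x = a \/ x = b \/ x = c) -> primeB x /\ ltS P x.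
  move=> a b c x H Hx; have [Pa Pb Pc _ [La Lb Lc]] := HS a b c H.
  by case: Hx => [->|[->|->]].
have STgt : forall x y, ST x y -> ltS P x /\ ltS P y.
  move=> x y [a [b [c [H1 [Hx Hy]]]]].
  by split; [exact: (memT _ _ _ _ H1 Hx).2|exact: (memT _ _ _ _ H1 Hy).2].
have nle : forall x, ltS P x -> ~ leB x P := fun x H => t_asym HB H.
split; first by split.
split.
  move=> Q HQ J.
  have Hbound : forall b, ltS b J -> exists K, forall a d, PhiSem S Q P t a b d -> ltS a K /\ ltS d K.
    move=> b _.
    have Hdle : forall a d, PhiSem S Q P t a b d -> leB d Q.
      move=> a d [_ [_ [_ [[_ [_ E]]|[[_ E]|[_ [_ [_ E]]]]]]]].
      - by rewrite -E; apply: t_lemul.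
      - by rewrite -E; apply: t_lemul.
      - by right.
    case: (classic (exists u v w, S u v w /\ (b = u \/ b = v \/ b = w))) => [[u [v [w [Huvw Hb]]]]|Hno].
    + exists (addS (addS (addS (addS (addS (addS Q P) b) u) v) w) (oneS B)) => a d HPh.
      split; apply: (t_bound HB); last by left; exact: Hdle HPh.
      move: HPh => [_ [_ [_ [[HaP _]|[[Hst _]|[Eab _]]]]]].
      * by right; left.
      * move: Hst => [a1 [b1 [c1 [H1 [Ha1 Hb1]]]]].
        have [Ea Eb Ec] := uniqT _ _ _ _ _ _ _ H1 Huvw Hb1 Hb.
        by right; right; right; rewrite -Ea -Eb -Ec.
      * by right; right; left.
    + exists (addS (addS (addS (addS (addS (addS Q P) b) (zeroS B)) (zeroS B)) (zeroS B)) (oneS B)) => a d HPh.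
      split; apply: (t_bound HB); last by left; exact: Hdle HPh.
      move: HPh => [_ [_ [_ [[HaP _]|[[Hst _]|[Eab _]]]]]].
      * by right; left.
      * exfalso; apply: Hno; move: Hst => [a1 [b1 [c1 [H1 [Ha1 Hb1]]]]].
        by exists a1, b1, c1.
      * by right; right; left.
  have [c Hc] := t_good HB HSf HmN HmB Hbound.
  exists c => a b d; rewrite Hc.
  split.
  - move=> [HbJ [Ha [Hb [Hd Hcase]]]].
    have [E1 E2 E3 E4] := HE Q HQ a b Ha Hb.
    have Ed : d = eps Q a b.
      case: Hcase => [[Ha1 [Hb1 Et]]|[[Hst E3']|[Eab [Hlt [Hnst Edq]]]]].
      + by apply: (canc t) => //; rewrite Et E1.
      + by apply: (canc (numB B 3)) => //; rewrite E3' E2.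
      + by rewrite Edq E3.
    by split=> //; split=> //; split=> //; split=> //; rewrite -Ed.
  - move=> [Ha [Hb [HbJ [Hne Ed]]]].
    have [E1 E2 E3 E4] := HE Q HQ a b Ha Hb.
    split=> //; split=> //; split=> //; split; first by rewrite Ed.
    case: (classic (leB a P /\ leB b P)) => C1.
      by left; split; [exact: C1.1|split; [exact: C1.2|rewrite Ed E1]].
    case: (classic (ST a b)) => C2.
      by right; left; split=> //; rewrite Ed E2.
    case: (classic (a = b /\ ltS P a /\ ~ ST a a)) => C3.
      by right; right; move: C3 => [? [? ?]]; split=> //; split=> //; split=> //; rewrite Ed E3.
    by exfalso; apply: Hne; apply: E4.
split; first exact: Hzero.
split.
  move=> Q1 Q2 H1 H2 p q Hp Hq; case: (CL p q Hp Hq) => [[s [Hs Hsv]]|H].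
    by apply: (canc s) => //; rewrite (t_mulDr HB) !Hsv //; apply: OD.
  by rewrite !H ?(t_add0 HB) //; apply: OD.
split.
  move=> Q1 Q2 H1 H2 p q Hp Hq; case: (CL p q Hp Hq) => [[s [Hs Hsv]]|H].
    by apply: (canc s) => //; rewrite -mon_scale // !Hsv //; apply: OB.
  by rewrite !H ?mon00 //; apply: OB.
split; last first.
  move=> Q1 Q2 H1 H2 Heq.
  have two_p := t_two_prime HB.
  have two_le : leB (numB B 2) P := t_nth_ge2 HB HnN HnB HP.
  have [E1 _ _ _] := HE Q1 H1 _ _ two_p two_p.
  have [E2 _ _ _] := HE Q2 H2 _ _ two_p two_p.
  by rewrite -(E1 (conj two_le two_le)) -(E2 (conj two_le two_le)) Heq.
move=> Q1 Q2 H1 H2 p r Hp Hr J c1 c2 Hc1 Hc2 HJ.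
have H12 := OM Q1 Q2 H1 H2.
have M1 : forall q m, memB p q m c1 <-> (primeB q /\ ltS q J /\ eps Q1 p q <> zeroS B /\ m = eps Q1 p q).
  move=> q m; rewrite (Hc1 p q m); split; first by move=> [_ ?].
  by move=> ?; split.
have M2 : forall q n, memB q r n c2 <-> (primeB q /\ eps Q2 q r <> zeroS B /\ n = eps Q2 q r).
  move=> q n; rewrite (Hc2 q r n); split; first by move=> [? [_ [_ ?]]].
  by move=> [? ?]; split=> //; split=> //; split=> //; apply: (t_ltS HB).
have NZ : forall Q, inO Q -> forall x y, primeB x -> primeB y -> eps Q x y <> zeroS B ->
    (leB x P /\ leB y P) \/ ST x y \/ (x = y /\ ltS P x /\ ~ ST x x).
  move=> Q HQ x y Hx Hy Hne; have [_ _ _ E4] := HE Q HQ x y Hx Hy.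
  case: (classic (leB x P /\ leB y P)) => ?; first by left.
  case: (classic (ST x y)) => ?; first by right; left.
  case: (classic (x = y /\ ltS P x /\ ~ ST x x)) => ?; first by right; right.
  by exfalso; apply: Hne; apply: E4.
case: (classic (leB p P /\ leB r P)) => C1.
  pose x := eps Q1 p p; pose y := eps Q2 r r.
  have Ex : mulS t x = Q1 by have [E _ _ _] := HE Q1 H1 p p Hp Hp; apply: E; split; apply: C1.1.
  have Ey : mulS t y = Q2 by have [E _ _ _] := HE Q2 H2 r r Hr Hr; apply: E; split; apply: C1.2.
  have val1 : forall q, primeB q -> leB q P -> eps Q1 p q = x.
    move=> q Hq HqP; apply: (canc t) => //; have [E _ _ _] := HE Q1 H1 p q Hp Hq.
    by rewrite Ex; apply: E; split=> //; apply: C1.1.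
  have val2 : forall q, primeB q -> leB q P -> eps Q2 q r = y.
    move=> q Hq HqP; apply: (canc t) => //; have [E _ _ _] := HE Q2 H2 q r Hq Hr.
    by rewrite Ey; apply: E; split=> //; apply: C1.2.
  rewrite (t_sumA HB HnN HnB HmN HmB HsN HsB (x:=x) (y:=y) HP).
    apply: (canc t) => //; have [E _ _ _] := HE _ H12 p r Hp Hr.
    by rewrite (E C1) (t_ringid HB) Ex Ey.
  move=> q m n; rewrite M1 M2; split.
  - move=> [[Pq [HqJ [Hne1 Em]]] [_ [Hne2 En]]].
    have HqP : leB q P.
      case: (NZ Q1 H1 p q Hp Pq Hne1) => [[_ //]|[Hst|[_ [Hlt _]]]]; exfalso.
      + by apply: (nle p (STgt _ _ Hst).1); apply: C1.1.
      + by apply: (nle p Hlt); apply: C1.1.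
    have E1 := val1 q Pq HqP; have E2 := val2 q Pq HqP.
    by rewrite Em En -E1 -E2; split=> //; split=> //; split=> //; split=> //; split.
  - move=> [Pq [HqP [Em [En [Hx Hy]]]]].
    have E1 := val1 q Pq HqP; have E2 := val2 q Pq HqP.
    split; split=> //; last by rewrite E2.
    split; first by apply: HJ => //; rewrite E2.
    by rewrite E1.
case: (classic (ST p r)) => C2.
  move: (C2) => [a [b [w [Habw [Hpa Hra]]]]].
  have [Pa Pb Pw Eq _] := HS a b w Habw.
  have [Dab Dbw Daw] := t_distinct HB Pw Eq.
  pose x := eps Q1 p p; pose y := eps Q2 r r.
  have Ex : mulS (numB B 3) x = Q1.
    by have [_ E _ _] := HE Q1 H1 p p Hp Hp; apply: E; apply: (STrefl _ _ C2).
  have Ey : mulS (numB B 3) y = Q2.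
    by have [_ E _ _] := HE Q2 H2 r r Hr Hr; apply: E; apply: (STrefl _ _ (STsym _ _ C2)).
  have inT : forall q, ST p q -> q = a \/ q = b \/ q = w.
    move=> q [a1 [b1 [w1 [H [Hp1 Hq1]]]]].
    have [Ea Eb Ew] := uniqT _ _ _ _ _ _ _ H Habw Hp1 Hpa.
    by rewrite -Ea -Eb -Ew.
  have val1 : forall q, ST p q -> eps Q1 p q = x.
    move=> q Hst; have Pq : primeB q.
      by move: (Hst) => [a1 [b1 [w1 [H [_ Hq1]]]]]; exact: (memT _ _ _ _ H Hq1).1.
    apply: (canc (numB B 3)) => //; have [_ E _ _] := HE Q1 H1 p q Hp Pq.
    by rewrite Ex; apply: E.
  have val2 : forall q, ST q r -> eps Q2 q r = y.
    move=> q Hst; have Pq : primeB q.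
      by move: (Hst) => [a1 [b1 [w1 [H [Hq1 _]]]]]; exact: (memT _ _ _ _ H Hq1).1.
    apply: (canc (numB B 3)) => //; have [_ E _ _] := HE Q2 H2 q r Pq Hr.
    by rewrite Ey; apply: E.
  rewrite (t_sum3 HB HmN HmB HsN HsB (x:=x) (y:=y) Dab Dbw Daw).
    apply: (canc (numB B 3)) => //; have [_ E _ _] := HE _ H12 p r Hp Hr.
    by rewrite (E C2) (t_ringid HB) Ex Ey.
  move=> q m n; rewrite M1 M2; split.
  - move=> [[Pq [HqJ [Hne1 Em]]] [_ [Hne2 En]]].
    have Hpq : ST p q.
      case: (NZ Q1 H1 p q Hp Pq Hne1) => [[HpP _]|[//|[_ [_ Hn]]]]; exfalso.
      + exact: (nle p (STgt _ _ C2).1 HpP).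
      + exact: (Hn (STrefl _ _ C2)).
    have Hqr : ST q r := STtrans _ _ _ (STsym _ _ Hpq) C2.
    have E1 := val1 q Hpq; have E2 := val2 q Hqr.
    by rewrite Em En -E1 -E2; split; [exact: inT|split=> //; split=> //; split].
  - move=> [Hq [Em [En [Hx Hy]]]].
    have Hpq : ST p q by exists a, b, w.
    have Hqr : ST q r by exists a, b, w.
    have Pq : primeB q := (memT _ _ _ _ Habw Hq).1.
    have E1 := val1 q Hpq; have E2 := val2 q Hqr.
    split; split=> //; last by rewrite E2.
    split; first by apply: HJ => //; rewrite E2.
    by rewrite E1.
case: (classic (p = r /\ ltS P p /\ ~ ST p p)) => C3.
  move: (C3) => [Epr [HltP HnST]]; subst r.
  have Ex : eps Q1 p p = Q1 by have [_ _ E _] := HE Q1 H1 p p Hp Hp; apply: E.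
  have Ey : eps Q2 p p = Q2 by have [_ _ E _] := HE Q2 H2 p p Hp Hp; apply: E.
  rewrite (t_sum1 HB HmN HmB HsN HsB (a:=p) (x:=eps Q1 p p) (y:=eps Q2 p p)).
    by have [_ _ E _] := HE _ H12 p p Hp Hp; rewrite (E C3) Ex Ey.
  move=> q m n; rewrite M1 M2; split.
  - move=> [[Pq [HqJ [Hne1 Em]]] [_ [Hne2 En]]].
    have Eq : q = p.
      case: (NZ Q1 H1 p q Hp Pq Hne1) => [[HpP _]|[Hst|[-> _]]] //; exfalso.
      + exact: (nle p HltP HpP).
      + exact: (HnST (STrefl _ _ Hst)).
    by subst q; split=> //; split=> //; split=> //; split.
  - move=> [Eq [Em [En [Hx Hy]]]]; subst q.
    split; split=> //; split; first by apply: HJ.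
    by split.
have [_ _ _ E4] := HE _ H12 p r Hp Hr.
rewrite (E4 C1 C2 C3).
rewrite (t_sum1 HB HmN HmB HsN HsB (a:=p) (x:=zeroS B) (y:=zeroS B)); first by rewrite (t_0mul HB).
move=> q m n; rewrite M1 M2; split; last by move=> [_ [_ [_ [H0 _]]]].
move=> [[Pq [HqJ [Hne1 Em]]] [_ [Hne2 En]]]; exfalso.
case: (NZ Q1 H1 p q Hp Pq Hne1) => [[HpP HqP]|[Hpq|[Epq [HltP HnST]]]];
case: (NZ Q2 H2 q r Pq Hr Hne2) => [[HqP' HrP]|[Hqr|[Eqr [HltQ HnSTq]]]].
- by apply: C1.
- exact: (nle q (STgt _ _ Hqr).1 HqP).
- exact: (nle q HltQ HqP).
- exact: (nle q (STgt _ _ Hpq).2 HqP').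
- exact: (C2 (STtrans _ _ _ Hpq Hqr)).
- by apply: HnSTq; subst r; apply: (STrefl _ _ (STsym _ _ Hpq)).
- by subst q; exact: (nle p HltP HqP').
- by apply: HnST; subst q; apply: (STrefl _ _ Hqr).
- by apply: C3; subst q r.
Qed.
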